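(* Let $\mathscr C$ be the small category defined below. Let $\Omega_1,\Omega_2,\Omega$ be objects of $\mathscr C$ with $\Omega_j\neq\emptyset$, and let $\phi_j:\Omega_j\to\Omega$ ($j=1,2$) be morphisms given by integers $n_j\in\mathrm{Hom}_{\mathscr C}(\Omega_j,\Omega)$. Let $n=\mathrm{lcm}(n_1,n_2)$, write $n=a_jn_j$ with $a_j\in\mathbb{N}^{\times}$, and let $\Omega':=\{\lambda\in[0,\infty)\mid a_j\lambda\in\Omega_j,\ j=1,2\}$. Then $\Omega'$ is an object of $\mathscr C$; if $\Omega'\neq\emptyset$ one has $a_j\in\mathrm{Hom}_{\mathscr C}(\Omega',\Omega_j)$ and $(\Omega',a_1,a_2)$ is the pullback (fibered product) of $\phi_1,\phi_2$ in $\mathscr C$; if $\Omega'=\emptyset$ the pullback of $\phi_1,\phi_2$ is the initial object $\emptyset$ of $\mathscr C$.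
   Context: $\mathbb{N}^{\times}$ denotes the multiplicative monoid of positive integers. The category $\mathscr C$ has as objects the (possibly empty) bounded open subintervals $\Omega$ of the half-line $[0,\infty)$ (with its usual topology, so intervals of the form $[0,a)$, $a>0$, are included). For $\Omega\neq\emptyset$, $\mathrm{Hom}_{\mathscr C}(\Omega,\Omega')=\{n\in\mathbb{N}^{\times}\mid n\Omega\subset\Omega'\}$, and $\mathrm{Hom}_{\mathscr C}(\emptyset,\Omega')$ is a one-point set for every $\Omega'$; composition is multiplication of integers. Thus $\emptyset$ is the initial object. *)

(* Defs.v *)
From Stdlib Require Import Reals Arith.
Open Scope R_scope.

(* Objects of the category C: (possibly empty) bounded open subintervals of
   the half-line [0,oo), with its subspace topology. *)
Definition is_obj (O : R -> Prop) : Prop :=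
  (forall x, O x -> 0 <= x) /\
  (forall x y z, O x -> O z -> x <= y <= z -> O y) /\
  (exists M, forall x, O x -> x <= M) /\
  (forall x, O x -> exists e, 0 < e /\
      forall y, 0 <= y -> Rabs (y - x) < e -> O y).

Definition nonempty (O : R -> Prop) : Prop := exists x, O x.

(* Morphisms are encoded as natural numbers.  For the empty source the
   one-point hom-set is encoded as {0}; composition is multiplication. *)
Definition is_hom (O O' : R -> Prop) (n : nat) : Prop :=
  (nonempty O -> (1 <= n)%nat /\ forall x, O x -> O' (INR n * x)) /\
  (~ nonempty O -> n = 0%nat).

Definition is_pullback (P : R -> Prop) (q1 q2 : nat)
    (O1 O2 O : R -> Prop) (n1 n2 : nat) : Prop :=
  is_obj P /\ is_hom P O1 q1 /\ is_hom P O2 q2 /\ (n1 * q1 = n2 * q2)%nat /\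
  forall (X : R -> Prop) (p1 p2 : nat),
    is_obj X -> is_hom X O1 p1 -> is_hom X O2 p2 -> (n1 * p1 = n2 * p2)%nat ->
    exists! u : nat, is_hom X P u /\ (q1 * u = p1)%nat /\ (q2 * u = p2)%nat.

Definition empty_obj : R -> Prop := fun _ => False.

(* Main.v *)
Require Import Defs.
From Stdlib Require Import Reals Arith Lia Lra Psatz Classical.
Open Scope R_scope.

Lemma arith1 (n1 n2 : nat) : (1 <= n1)%nat -> (1 <= n2)%nat ->
  (n1 * (Nat.lcm n1 n2 / n1) = Nat.lcm n1 n2)%nat /\
  (n2 * (Nat.lcm n1 n2 / n2) = Nat.lcm n1 n2)%nat /\
  (1 <= Nat.lcm n1 n2 / n1)%nat /\ (1 <= Nat.lcm n1 n2 / n2)%nat.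
Proof.
  intros h1 h2.
  assert (hl : Nat.lcm n1 n2 <> 0%nat).
  { intro E. apply Nat.lcm_eq_0 in E. lia. }
  destruct (Nat.divide_lcm_l n1 n2) as [z1 Hz1].
  destruct (Nat.divide_lcm_r n1 n2) as [z2 Hz2].
  assert (n1 <> 0%nat) by lia. assert (n2 <> 0%nat) by lia.
  assert (E1 : (Nat.lcm n1 n2 / n1 = z1)%nat) by (rewrite Hz1; apply Nat.div_mul; lia).
  assert (E2 : (Nat.lcm n1 n2 / n2 = z2)%nat) by (rewrite Hz2; apply Nat.div_mul; lia).
  rewrite E1, E2.
  repeat split; try lia.
Qed.

Lemma arith2 (n1 n2 p1 p2 : nat) : (1 <= n1)%nat -> (1 <= n2)%nat ->
  (n1 * p1 = n2 * p2)%nat ->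
  exists u, p1 = (Nat.lcm n1 n2 / n1 * u)%nat /\ p2 = (Nat.lcm n1 n2 / n2 * u)%nat.
Proof.
  intros h1 h2 E.
  destruct (arith1 n1 n2 h1 h2) as [A1 [A2 _]].
  assert (D : Nat.divide (Nat.lcm n1 n2) (n1 * p1)).
  { apply Nat.lcm_least. apply Nat.divide_factor_l. rewrite E. apply Nat.divide_factor_l. }
  destruct D as [u Hu]. exists u.
  set (a1 := (Nat.lcm n1 n2 / n1)%nat) in *.
  set (a2 := (Nat.lcm n1 n2 / n2)%nat) in *.
  set (n := Nat.lcm n1 n2) in *.
  split.
  - apply (Nat.mul_cancel_l _ _ n1); [lia|]. rewrite Hu, <- A1. lia.
  - apply (Nat.mul_cancel_l _ _ n2); [lia|]. rewrite <- E, Hu, <- A2. lia.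
Qed.

Lemma INR_ge1 (k : nat) : (1 <= k)%nat -> 1 <= INR k.
Proof. intro h. apply (le_INR 1 k) in h. simpl in h. exact h. Qed.

Theorem lemma2p4 (O1 O2 O : R -> Prop) (n1 n2 : nat) :
  is_obj O1 -> is_obj O2 -> is_obj O ->
  nonempty O1 -> nonempty O2 ->
  is_hom O1 O n1 -> is_hom O2 O n2 ->
  let n := Nat.lcm n1 n2 in
  let a1 := Nat.div n n1 in
  let a2 := Nat.div n n2 in
  let O' := fun l => 0 <= l /\ O1 (INR a1 * l) /\ O2 (INR a2 * l) in
  is_obj O' /\
  (nonempty O' ->
     is_hom O' O1 a1 /\ is_hom O' O2 a2 /\ is_pullback O' a1 a2 O1 O2 O n1 n2) /\
  (~ nonempty O' -> is_pullback empty_obj 0 0 O1 O2 O n1 n2).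
Proof.
  intros HO1 HO2 HO ne1 ne2 [H1 _] [H2 _] n a1 a2 O'.
  destruct (H1 ne1) as [h1 _]. destruct (H2 ne2) as [h2 _].
  destruct (arith1 n1 n2 h1 h2) as [A1 [A2 [B1 B2]]].
  fold n a1 a2 in A1, A2, B1, B2.
  pose proof (INR_ge1 _ B1) as R1. pose proof (INR_ge1 _ B2) as R2.
  destruct HO1 as [P1 [I1 [[M1 BM1] Op1]]].
  destruct HO2 as [P2 [I2 [[M2 BM2] Op2]]].
  assert (UNIV : forall X p1 p2, is_obj X -> is_hom X O1 p1 -> is_hom X O2 p2 ->
     (n1 * p1 = n2 * p2)%nat -> nonempty X ->
     exists u, (1 <= u)%nat /\ (a1 * u = p1)%nat /\ (a2 * u = p2)%nat /\
       forall x, X x -> O' (INR u * x)).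
  { intros X p1 p2 [PX _] [Hp1 _] [Hp2 _] E neX.
    destruct (Hp1 neX) as [hp1 Xp1]. destruct (Hp2 neX) as [hp2 Xp2].
    destruct (arith2 n1 n2 p1 p2 h1 h2 E) as [u [U1 U2]].
    fold n a1 a2 in U1, U2.
    exists u. split; [destruct u; lia|]. split; [lia|]. split; [lia|].
    intros x Xx. pose proof (PX x Xx).
    split; [apply Rmult_le_pos; auto using pos_INR|].
    split.
    - replace (INR a1 * (INR u * x)) with (INR p1 * x) by (rewrite U1, mult_INR; ring). auto.
    - replace (INR a2 * (INR u * x)) with (INR p2 * x) by (rewrite U2, mult_INR; ring). auto. }
  assert (OBJ : is_obj O').
  { split; [intros x [h _]; exact h|].
    split.
    { intros x y z [hx [x1 x2]] [hz [z1 z2]] [hxy hyz]. split; [lra|]. split.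
      - apply (I1 _ _ _ x1 z1). split; apply Rmult_le_compat_l; lra.
      - apply (I2 _ _ _ x2 z2). split; apply Rmult_le_compat_l; lra. }
    split.
    { exists M1. intros x [hx [x1 _]]. pose proof (BM1 _ x1). nra. }
    intros x [hx [x1 x2]].
    destruct (Op1 _ x1) as [e1 [e1p He1]]. destruct (Op2 _ x2) as [e2 [e2p He2]].
    exists (Rmin (e1 / INR a1) (e2 / INR a2)). split.
    { apply Rmin_pos; apply Rdiv_lt_0_compat; lra. }
    intros y hy hyx.
    assert (m1 := Rmin_l (e1 / INR a1) (e2 / INR a2)).
    assert (m2 := Rmin_r (e1 / INR a1) (e2 / INR a2)).
    split; [exact hy|]. split.
    - apply He1; [nra|].
      replace (INR a1 * y - INR a1 * x) with (INR a1 * (y - x)) by ring.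
      rewrite Rabs_mult, (Rabs_right (INR a1)) by lra.
      assert (Rabs (y - x) < e1 / INR a1) by lra.
      apply (Rmult_lt_compat_l (INR a1)) in H; [|lra].
      replace (INR a1 * (e1 / INR a1)) with e1 in H by (field; lra). exact H.
    - apply He2; [nra|].
      replace (INR a2 * y - INR a2 * x) with (INR a2 * (y - x)) by ring.
      rewrite Rabs_mult, (Rabs_right (INR a2)) by lra.
      assert (Rabs (y - x) < e2 / INR a2) by lra.
      apply (Rmult_lt_compat_l (INR a2)) in H; [|lra].
      replace (INR a2 * (e2 / INR a2)) with e2 in H by (field; lra). exact H. }
  split; [exact OBJ|]. split.
  - intros neO'.
    assert (HA1 : is_hom O' O1 a1).
    { split; [intros _; split; [exact B1| intros x [_ [x1 _]]; exact x1]|].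
      intro c; exfalso; exact (c neO'). }
    assert (HA2 : is_hom O' O2 a2).
    { split; [intros _; split; [exact B2| intros x [_ [_ x2]]; exact x2]|].
      intro c; exfalso; exact (c neO'). }
    split; [exact HA1|]. split; [exact HA2|].
    split; [exact OBJ|]. split; [exact HA1|]. split; [exact HA2|].
    split; [lia|].
    intros X p1 p2 OX Hp1 Hp2 E.
    destruct (classic (nonempty X)) as [neX|neX].
    + destruct (UNIV X p1 p2 OX Hp1 Hp2 E neX) as [u [hu [U1 [U2 Hu]]]].
      exists u. split.
      * split; [|split; assumption].
        split; [intros _; split; assumption|]. intro c; exfalso; exact (c neX).
      * intros u' [_ [U1' _]]. apply (Nat.mul_cancel_l _ _ a1); lia.
    + destruct Hp1 as [_ Hp1]. destruct Hp2 as [_ Hp2].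
      rewrite (Hp1 neX), (Hp2 neX).
      exists 0%nat. split.
      * split; [|lia]. split; [intro c; exfalso; exact (neX c)|]. auto.
      * intros u' [[_ Hu'] _]. symmetry; auto.
  - intros neO'.
    assert (Hne : ~ nonempty empty_obj) by (intros [x c]; exact c).
    split; [unfold is_obj, empty_obj; repeat split; try contradiction; exists 0; contradiction|].
    split; [split; [intro c; exfalso; exact (Hne c)|auto]|].
    split; [split; [intro c; exfalso; exact (Hne c)|auto]|].
    split; [lia|].
    intros X p1 p2 OX Hp1 Hp2 E.
    destruct (classic (nonempty X)) as [neX|neX].
    + destruct (UNIV X p1 p2 OX Hp1 Hp2 E neX) as [u [hu [U1 [U2 Hu]]]].
      exfalso. destruct neX as [x Xx]. apply neO'. exists (INR u * x). auto.
    + destruct Hp1 as [_ Hp1]. destruct Hp2 as [_ Hp2].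
      rewrite (Hp1 neX), (Hp2 neX).
      exists 0%nat. split.
      * split; [|lia]. split; [intro c; exfalso; exact (neX c)|]. auto.
      * intros u' [[_ Hu'] _]. symmetry; auto.
Qed.
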